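(* $I^*$ is a non-trivial Borel $\sigma$-ideal on $\mathbf{Tr}$ which does not satisfy ccc but satisfies the $\omega_2$-chain condition: there is no family of $\omega_2$ Borel sets not in $I^*$ whose pairwise intersections all belong to $I^*$.
   Context: $\mathbf{Tr}$ is the set of all subtrees of $\omega^{<\omega}$ (subsets closed under initial segments), a closed subspace of $2^{(\omega^{<\omega})}$ with the product topology. $\mathbf{Trw}\subseteq\mathbf{Tr}$ is the set of well-founded trees. For $T\in\mathbf{Trw}$, $h_T:T\to\omega_1$ is the canonical rank function: $h_T(\nu)=\sup\{h_T(\nu')+1:\nu'\in T \text{ an immediate successor of }\nu\}$. For $\alpha<\omega_1$, $A_\alpha=\{T\in\mathbf{Trw}: h_T(\langle\rangle)=\alpha\}$. For $n\in\omega$ let $n^{\le n}$ be the set of sequences of length $\le n$ with values $<n$. $\tau_\alpha$ is the topology on $A_\alpha$ with basis the sets $U(n,T)=\{T'\in A_\alpha: T'\cap n^{\le n}=T\cap n^{\le n} \text{ and } h_{T'}\restriction (T\cap n^{\le n})=h_T\restriction(T\cap n^{\le n})\}$ for $T\in A_\alpha$, $n\in\omega$. $I^*$ is the family of all subsets of Borel sets $B\subseteq\mathbf{Tr}$ such that $B\cap A_\alpha$ is $\tau_\alpha$-meager for every $0<\alpha<\omega_1$. An ideal satisfies ccc if every family of pairwise disjoint Borel sets not in the ideal is countable. *)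

(* Defs.v *)
(* Points of 2^(omega^{<omega}) are functions  list nat -> bool. *)
From Stdlib Require Import List Arith.
Import ListNotations.

Definition pt := list nat -> bool.
Definition pset := pt -> Prop.

(* product topology: U is open iff membership of each point is witnessed
   by finitely many coordinates *)
Definition is_open (U : pset) : Prop :=
  forall x, U x -> exists l : list (list nat),
    forall y, (forall s, In s l -> y s = x s) -> U y.

Inductive borel : pset -> Prop :=
| borel_open U : is_open U -> borel U
| borel_compl U : borel U -> borel (fun x => ~ U x)
| borel_union (F : nat -> pset) :
    (forall n, borel (F n)) -> borel (fun x => exists n, F n x).

Definition Tr : pset := fun T => forall s t, T (s ++ t) = true -> T s = true.

Definition subset (A B : pset) : Prop := forall x, A x -> B x.

(* Borel subsets of Tr (Tr is closed, so these are the Borel sets of the subspace) *)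
Definition borel_Tr (B : pset) : Prop := borel B /\ subset B Tr.

Definition Trw : pset := fun T =>
  Tr T /\ ~ exists f : nat -> nat, forall n, T (map f (seq 0 n)) = true.

Inductive Ord : Type :=
| OZ : Ord
| OS : Ord -> Ord
| OL : (nat -> Ord) -> Ord.   (* OL f = sup_n f n *)

Inductive ole : Ord -> Ord -> Prop :=
| ole_zero x : ole OZ x
| ole_trans x y z : ole x y -> ole y z -> ole x z
| ole_succ x y : ole x y -> ole (OS x) (OS y)
| ole_cocone x f k : ole x (f k) -> ole x (OL f)
| ole_limiting f x : (forall k, ole (f k) x) -> ole (OL f) x.

Definition oeq (x y : Ord) : Prop := ole x y /\ ole y x.
Definition olt (x y : Ord) : Prop := ole x y /\ ~ ole y x.

Definition is_rank (T : pt) (h : list nat -> Ord) : Prop :=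
  forall s, T s = true ->
    oeq (h s) (OL (fun n => if T (s ++ [n]) then OS (h (s ++ [n])) else OZ)).

Definition rank_is (T : pt) (s : list nat) (o : Ord) : Prop :=
  exists h, is_rank T h /\ oeq (h s) o.

Definition same_rank (T T' : pt) (s : list nat) : Prop :=
  exists o, rank_is T s o /\ rank_is T' s o.

Definition A (alpha : Ord) : pset := fun T =>
  Trw T /\ T [] = true /\ rank_is T [] alpha.

Definition small (n : nat) (s : list nat) : Prop :=
  length s <= n /\ Forall (fun k => k < n) s.

Definition U (alpha : Ord) (n : nat) (T : pt) : pset := fun T' =>
  A alpha T' /\
  (forall s, small n s -> T' s = T s) /\
  (forall s, small n s -> T s = true -> same_rank T' T s).

Definition tau_open (alpha : Ord) (O : pset) : Prop :=
  subset O (A alpha) /\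
  forall T, O T -> exists n, subset (U alpha n T) O.

Definition nowhere_dense (alpha : Ord) (N : pset) : Prop :=
  forall O, tau_open alpha O -> (exists T, O T) ->
    exists O', tau_open alpha O' /\ (exists T, O' T) /\ subset O' O /\
      (forall T, O' T -> ~ N T).

Definition meager (alpha : Ord) (M : pset) : Prop :=
  exists N : nat -> pset, (forall n, nowhere_dense alpha (N n)) /\
    forall T, M T -> exists n, N n T.

Definition Istar (X : pset) : Prop :=
  exists B, borel_Tr B /\ subset X B /\
    forall alpha, olt OZ alpha ->
      meager alpha (fun T => B T /\ A alpha T).

Definition inter (X Y : pset) : pset := fun T => X T /\ Y T.

Definition sigma_ideal_on_Tr (I : pset -> Prop) : Prop :=
  (forall X, I X -> subset X Tr) /\
  I (fun _ => False) /\
  (forall X Y, I Y -> subset X Y -> I X) /\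
  (forall F : nat -> pset, (forall n, I (F n)) -> I (fun T => exists n, F n T)).

Definition nontrivial (I : pset -> Prop) : Prop :=
  ~ I Tr /\ forall T, Tr T -> I (fun T' => T' = T).

Definition borel_generated (I : pset -> Prop) : Prop :=
  forall X, I X -> exists B, borel_Tr B /\ I B /\ subset X B.

Definition ccc (I : pset -> Prop) : Prop :=
  forall (J : Type) (F : J -> pset),
    (forall j, borel_Tr (F j) /\ ~ I (F j)) ->
    (forall i j, i <> j -> forall T, ~ (F i T /\ F j T)) ->
    exists g : J -> nat, forall i j, g i = g j -> i = j.

(* omega_2-chain condition: every family of Borel sets not in I with pairwise
   intersections in I has size <= aleph_1, i.e. injects into omega_1
   (= Brouwer ordinals modulo oeq) *)
Definition omega2_cc (I : pset -> Prop) : Prop :=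
  forall (J : Type) (F : J -> pset),
    (forall j, borel_Tr (F j) /\ ~ I (F j)) ->
    (forall i j, i <> j -> I (inter (F i) (F j))) ->
    exists g : J -> Ord, forall i j, oeq (g i) (g j) -> i = j.

(* Main.v *)
Require Import Defs.
From Stdlib Require Import List Arith Lia Classical ClassicalEpsilon FunctionalExtensionality PropExtensionality Cantor ProofIrrelevance.
Import ListNotations.

Fixpoint leo (x y : Ord) {struct x} : Prop :=
  match x with
  | OZ => True
  | OS x' => (fix ltx (y : Ord) : Prop :=
      match y with OZ => False | OS y' => leo x' y' | OL g => exists k, ltx (g k) end) y
  | OL f => forall k, leo (f k) y
  end.

Definition lto x y := leo (OS x) y.

Lemma Olt_OZ x : lto x OZ -> False. Proof. simpl. auto. Qed.
Lemma Olt_OS x y : lto x (OS y) = leo x y. Proof. reflexivity. Qed.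
Lemma Olt_OL x g : lto x (OL g) = exists k, lto x (g k). Proof. reflexivity. Qed.
Lemma Ole_OL f y : leo (OL f) y = forall k, leo (f k) y. Proof. reflexivity. Qed.
Lemma Ole_OS x y : leo (OS x) y = lto x y. Proof. reflexivity. Qed.

Lemma Ole_cocone x g k : leo x (g k) -> leo x (OL g).
Proof.
  revert g k. induction x as [|x IH|f IH]; intros g k H.
  - exact I.
  - rewrite Ole_OS, Olt_OL. exists k. exact H.
  - rewrite Ole_OL in *. intro i. eapply IH. apply H.
Qed.

Lemma Ole_refl x : leo x x.
Proof.
  induction x as [|x IH|f IH].
  - exact I.
  - rewrite Ole_OS, Olt_OS. exact IH.
  - rewrite Ole_OL. intro k. eapply Ole_cocone. apply IH.
Qed.

Lemma Ole_trans x y z : leo x y -> leo y z -> leo x z.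
Proof.
  revert y z. induction x as [|x IHx|f IHf]; intros y z H1 H2.
  - exact I.
  - rewrite Ole_OS in *. revert z H1 H2.
    induction y as [|y IHy|g IHg]; intros z H1 H2.
    + destruct (Olt_OZ _ H1).
    + rewrite Olt_OS in H1. rewrite Ole_OS in H2.
      induction z as [|z IHz|h IHh].
      * destruct (Olt_OZ _ H2).
      * rewrite Olt_OS in *. eapply IHx; eauto.
      * rewrite Olt_OL in *. destruct H2 as [k Hk]. exists k. apply IHh; auto.
    + rewrite Olt_OL in H1. destruct H1 as [k Hk]. rewrite Ole_OL in H2.
      eapply IHg; eauto.
  - rewrite Ole_OL in *. intro k. eapply IHf; eauto.
Qed.

Lemma Olt_le_trans x y z : lto x y -> leo y z -> lto x z.
Proof. unfold lto. apply Ole_trans. Qed.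
Lemma Ole_lt_trans x y z : leo x y -> lto y z -> lto x z.
Proof. unfold lto. intros H1 H2. eapply Ole_trans; [|exact H2]. exact H1. Qed.
Lemma Olt_le x y : lto x y -> leo x y.
Proof.
  intro H. eapply Ole_trans; [|exact H].
  clear. induction x as [|x IH|f IH].
  - exact I.
  - rewrite Ole_OS, Olt_OS. exact IH.
  - rewrite Ole_OL. intro k. eapply Ole_trans. apply IH.
    change (leo (f k) (OL f)). eapply Ole_cocone. apply Ole_refl.
Qed.
Lemma Olt_trans x y z : lto x y -> lto y z -> lto x z.
Proof. intros. eapply Olt_le_trans; eauto using Olt_le. Qed.
Lemma Olt_succ x : lto x (OS x). Proof. rewrite Olt_OS. apply Ole_refl. Qed.

Lemma ole_le x y : ole x y -> leo x y.
Proof.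
  induction 1.
  - exact I.
  - eapply Ole_trans; eauto.
  - exact IHole.
  - eapply Ole_cocone; eauto.
  - rewrite Ole_OL. exact H0.
Qed.

Lemma Ole_ole x y : leo x y -> ole x y.
Proof.
  revert y. induction x as [|x IHx|f IHf]; intros y H.
  - constructor.
  - rewrite Ole_OS in H. induction y as [|y IHy|g IHg].
    + destruct (Olt_OZ _ H).
    + apply ole_succ. apply IHx. exact H.
    + rewrite Olt_OL in H. destruct H as [k Hk]. apply ole_cocone with k. apply IHg. exact Hk.
  - apply ole_limiting. intro k. apply IHf. apply H.
Qed.

Lemma ole_iff x y : ole x y <-> leo x y.
Proof. split; [apply ole_le|apply Ole_ole]. Qed.

Lemma Olt_wf : well_founded lto.
Proof.
  assert (H : forall x y, lto y x -> Acc lto y).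
  { induction x as [|x IH|g IH]; intros y H.
    - destruct (Olt_OZ _ H).
    - rewrite Olt_OS in H. constructor. intros z Hz. apply IH. eapply Olt_le_trans; eauto.
    - rewrite Olt_OL in H. destruct H as [k Hk]. eapply IH; eauto. }
  intro x. constructor. apply H.
Qed.

Lemma Olt_irrefl x : ~ lto x x.
Proof.
  induction (Olt_wf x) as [x _ IH]. intro H. apply (IH x H H).
Qed.

Lemma Ole_lt_total x y : leo x y \/ lto y x.
Proof.
  revert y. induction x as [|x IHx|f IHf]; intro y.
  - left. exact I.
  - rewrite Ole_OS. unfold lto at 2. rewrite Ole_OS, Olt_OS.
    induction y as [|y IHy|g IHg].
    + right. exact I.
    + rewrite Olt_OS, Ole_OS. destruct (IHx y); auto.
    + rewrite Olt_OL, Ole_OL.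
      destruct (classic (exists k, lto x (g k))) as [H|H]; [left; exact H|right].
      intro k. destruct (IHg k) as [H1|H1]; auto. exfalso; apply H; eauto.
  - rewrite Ole_OL.
    destruct (classic (forall k, leo (f k) y)) as [H|H]; [left; exact H|right].
    apply not_all_ex_not in H. destruct H as [k Hk].
    destruct (IHf k y) as [H1|H1]; [contradiction|].
    eapply Olt_le_trans; [exact H1|]. eapply Ole_cocone. apply Ole_refl.
Qed.

Lemma not_le_lt x y : ~ leo x y -> lto y x.
Proof. intro H. destruct (Ole_lt_total x y); tauto. Qed.
Lemma Olt_not_le x y : lto x y -> ~ leo y x.
Proof. intros H1 H2. apply (Olt_irrefl x). eapply Olt_le_trans; eauto. Qed.

Definition eqo x y := leo x y /\ leo y x.
Lemma oeq_iff x y : oeq x y <-> eqo x y.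
Proof. unfold oeq, eqo. rewrite !ole_iff. tauto. Qed.
Lemma olt_iff x y : olt x y <-> lto x y.
Proof.
  unfold olt. rewrite !ole_iff. split.
  - intros [H1 H2]. apply not_le_lt. exact H2.
  - intro H. split. apply Olt_le, H. apply Olt_not_le, H.
Qed.
Lemma eqo_refl x : eqo x x. Proof. split; apply Ole_refl. Qed.
Lemma eqo_sym x y : eqo x y -> eqo y x. Proof. unfold eqo; tauto. Qed.
Lemma eqo_trans x y z : eqo x y -> eqo y z -> eqo x z.
Proof. unfold eqo; intros [] []; split; eapply Ole_trans; eauto. Qed.
Lemma Ole_total x y : leo x y \/ leo y x.
Proof. destruct (Ole_lt_total x y); auto using Olt_le. Qed.

Definition term (T : pt) (h : list nat -> Ord) (s : list nat) (m : nat) : Ord :=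
  if T (s ++ [m]) then OS (h (s ++ [m])) else OZ.

Lemma is_rank_eq T h s : is_rank T h -> T s = true -> eqo (h s) (OL (term T h s)).
Proof. intros H Hs. apply oeq_iff. apply H. exact Hs. Qed.

Lemma OL_cong f g : (forall k, eqo (f k) (g k)) -> eqo (OL f) (OL g).
Proof.
  intro H. split; rewrite Ole_OL; intro k; eapply Ole_cocone; apply (H k).
Qed.

Lemma OL_le f g : (forall k, exists k', leo (f k) (g k')) -> leo (OL f) (OL g).
Proof. intro H. rewrite Ole_OL. intro k. destruct (H k) as [k' Hk]. eapply Ole_cocone; eauto. Qed.

Lemma Ole_OL_elim f y k : leo (OL f) y -> leo (f k) y.
Proof. rewrite Ole_OL. auto. Qed.

Lemma is_rank_lt T h s m : is_rank T h -> T s = true -> T (s ++ [m]) = true ->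
  lto (h (s ++ [m])) (h s).
Proof.
  intros H Hs Hc. destruct (is_rank_eq T h s H Hs) as [_ H2].
  apply (Ole_OL_elim _ _ m) in H2. unfold term in H2. rewrite Hc in H2. exact H2.
Qed.

Lemma tree_prefix T s t : Tr T -> T (s ++ t) = true -> T s = true.
Proof. intros H. apply H. Qed.

Lemma is_rank_wf T h : Tr T -> is_rank T h ->
  ~ exists f : nat -> nat, forall n, T (map f (seq 0 n)) = true.
Proof.
  intros HT Hr [f Hf].
  set (p := fun n => map f (seq 0 n)).
  assert (Hp : forall n, p (S n) = p n ++ [f n]).
  { intro n. unfold p. rewrite seq_S, map_app. reflexivity. }
  assert (forall o, Acc lto o -> forall n, h (p n) = o -> False).
  { intros o Ho. induction Ho as [o _ IH]. intros n Hn.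
    apply (IH (h (p (S n)))) with (S n); auto.
    rewrite <- Hn, Hp. apply (is_rank_lt T); [exact Hr|apply Hf|]. rewrite <- Hp. apply Hf. }
  apply (H (h (p 0)) (Olt_wf _) 0). reflexivity.
Qed.

Lemma is_rank_Trw T h : Tr T -> is_rank T h -> Trw T.
Proof. intros. split; auto. eapply is_rank_wf; eauto. Qed.

Definition crel (T : pt) (c s : list nat) : Prop := T c = true /\ exists m, c = s ++ [m].

Lemma Trw_Acc_root T : Trw T -> Acc (crel T) [].
Proof.
  intros [HT Hwf]. apply NNPP. intro Hn.
  assert (Hstep : forall s, ~ Acc (crel T) s -> exists m, T (s ++ [m]) = true /\ ~ Acc (crel T) (s ++ [m])).
  { intros s Hs. apply NNPP. intro H. apply Hs. constructor. intros c [Hc [m ->]].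
    apply NNPP. intro H2. apply H. exists m. auto. }
  set (g := fun s => epsilon (inhabits 0) (fun m => T (s ++ [m]) = true /\ ~ Acc (crel T) (s ++ [m]))).
  assert (Hg : forall s, ~ Acc (crel T) s -> T (s ++ [g s]) = true /\ ~ Acc (crel T) (s ++ [g s])).
  { intros s Hs. unfold g. apply epsilon_spec. apply Hstep, Hs. }
  set (pth := fix pth n := match n with 0 => [] | S k => pth k ++ [g (pth k)] end).
  assert (Hpth : forall n, ~ Acc (crel T) (pth n) /\ (n = 0 \/ T (pth n) = true)).
  { induction n as [|n [IH _]]. split; auto. simpl. split; [apply Hg; auto|right; apply Hg; auto]. }
  apply Hwf. exists (fun k => g (pth k)). intro n.
  assert (E : map (fun k => g (pth k)) (seq 0 n) = pth n).
  { induction n. reflexivity. rewrite seq_S, map_app, IHn. reflexivity. }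
  rewrite E. destruct n.
  - simpl. destruct (T []) eqn:E0; auto. exfalso. apply Hn. constructor.
    intros c [Hc [m ->]]. simpl in Hc. apply (HT [] [m]) in Hc. congruence.
  - destruct (Hpth (S n)) as [_ [H|H]]; [discriminate|exact H].
Qed.

Lemma Trw_Acc T s : Trw T -> T s = true -> Acc (crel T) s.
Proof.
  intros Hw Hs. pose proof (Trw_Acc_root T Hw) as H0.
  induction s as [|m s IH] using rev_ind. exact H0.
  apply Acc_inv with s. apply IH. eapply tree_prefix; eauto. apply Hw.
  split; eauto.
Qed.

Lemma is_rank_unique T h1 h2 : Trw T -> is_rank T h1 -> is_rank T h2 ->
  forall s, T s = true -> eqo (h1 s) (h2 s).
Proof.
  intros Hw H1 H2 s Hs. induction (Trw_Acc T s Hw Hs) as [s _ IH].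
  eapply eqo_trans. apply is_rank_eq; eauto.
  eapply eqo_trans. 2: apply eqo_sym, is_rank_eq; eauto.
  apply OL_cong. intro k. unfold term. destruct (T (s ++ [k])) eqn:E.
  - assert (eqo (h1 (s ++ [k])) (h2 (s ++ [k]))). apply IH; auto. split; eauto.
    destruct H. split; auto.
  - apply eqo_refl.
Qed.

Inductive RK (T : pt) : list nat -> Ord -> Prop :=
| rk_intro s (F : nat -> Ord) :
    (forall m, T (s ++ [m]) = true -> RK T (s ++ [m]) (F m)) ->
    RK T s (OL (fun m => if T (s ++ [m]) then OS (F m) else OZ)).

Lemma RK_unique T s o1 o2 : RK T s o1 -> RK T s o2 -> eqo o1 o2.
Proof.
  intro H. revert o2. induction H as [s F HF IH]. intros o2 H2. inversion H2; subst.
  apply OL_cong. intro k. destruct (T (s ++ [k])) eqn:E.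
  - destruct (IH k E (F0 k) (H k E)). split; auto.
  - apply eqo_refl.
Qed.

Lemma RK_exists T s : Trw T -> T s = true -> exists o, RK T s o.
Proof.
  intros Hw Hs. induction (Trw_Acc T s Hw Hs) as [s _ IH].
  set (F := fun m => epsilon (inhabits OZ) (RK T (s ++ [m]))).
  exists (OL (fun m => if T (s ++ [m]) then OS (F m) else OZ)). constructor.
  intros m Hm. unfold F. apply epsilon_spec. apply IH; auto. split; eauto.
Qed.

Definition hT (T : pt) (s : list nat) : Ord := epsilon (inhabits OZ) (RK T s).

Lemma hT_RK T s : Trw T -> T s = true -> RK T s (hT T s).
Proof. intros. unfold hT. apply epsilon_spec. apply RK_exists; auto. Qed.

Lemma hT_rank T : Trw T -> is_rank T (hT T).
Proof.
  intros Hw s Hs. apply oeq_iff. pose proof (hT_RK T s Hw Hs) as H.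
  inversion H as [s0 F HF E1 E2].
  apply OL_cong. intro k. unfold term. destruct (T (s ++ [k])) eqn:E.
  - destruct (RK_unique T _ _ _ (HF k E) (hT_RK T _ Hw E)). split; auto.
  - apply eqo_refl.
Qed.

Lemma rank_is_iff T s o : Trw T -> T s = true -> (rank_is T s o <-> eqo (hT T s) o).
Proof.
  intros Hw Hs. split.
  - intros [h [Hh Ho]]. apply oeq_iff in Ho. eapply eqo_trans; [|exact Ho].
    apply is_rank_unique with T; auto. apply hT_rank; auto.
  - intro H. exists (hT T). split. apply hT_rank; auto. apply oeq_iff; auto.
Qed.

Lemma same_rank_iff T T' s : Trw T -> Trw T' -> T s = true -> T' s = true ->
  (same_rank T T' s <-> eqo (hT T s) (hT T' s)).
Proof.
  intros Hw Hw' Hs Hs'. unfold same_rank. split.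
  - intros [o [H1 H2]]. rewrite rank_is_iff in H1, H2 by auto.
    eapply eqo_trans; eauto using eqo_sym.
  - intro H. exists (hT T s). rewrite !rank_is_iff by auto. split; auto using eqo_refl, eqo_sym.
Qed.

Lemma rank_le_root T h s : Tr T -> is_rank T h -> T s = true -> leo (h s) (h []).
Proof.
  intros HT Hr. induction s as [|m s IH] using rev_ind; intro Hs.
  - apply Ole_refl.
  - eapply Ole_trans; [apply Olt_le, (is_rank_lt T); eauto|]. apply IH. all: eapply tree_prefix; eauto.
Qed.

Lemma A_iff alpha T : A alpha T <-> Trw T /\ T [] = true /\ eqo (hT T []) alpha.
Proof.
  unfold A. split; intros [H1 [H2 H3]]; (split; [exact H1|split; [exact H2|]]); [apply (rank_is_iff T [] alpha H1 H2); exact H3|apply (rank_is_iff T [] alpha H1 H2); exact H3].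
Qed.

Lemma A_eqo alpha beta T : eqo alpha beta -> A alpha T -> A beta T.
Proof. rewrite !A_iff. intros E [H1 [H2 H3]]. split; [exact H1|split; [exact H2|]]. eapply eqo_trans; eauto. Qed.

Lemma small_mono n n' s : n <= n' -> small n s -> small n' s.
Proof.
  intros Hn [H1 H2]. split. lia. eapply Forall_impl; [|exact H2]. simpl; intros; lia.
Qed.

Definition bnd (s : list nat) : nat := length s + list_sum s + 1.

Lemma small_bnd s : small (bnd s) s.
Proof.
  unfold bnd. split. lia.
  assert (H : Forall (fun k => k <= list_sum s) s).
  { induction s as [|a s IH]; constructor. simpl; lia.
    eapply Forall_impl; [|exact IH]. simpl; intros; lia. }
  eapply Forall_impl; [|exact H]. simpl; intros; lia.
Qed.

Lemma small_bnd_ge n s : bnd s <= n -> small n s.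
Proof. intro H. eapply small_mono; [exact H|apply small_bnd]. Qed.

Lemma A_Trw alpha T : A alpha T -> Trw T. Proof. intros [H _]; exact H. Qed.

Lemma U_char alpha n T T' : A alpha T ->
  (U alpha n T T' <-> A alpha T' /\ (forall s, small n s -> T' s = T s) /\
     (forall s, small n s -> T s = true -> eqo (hT T' s) (hT T s))).
Proof.
  intro HA. unfold U. split.
  - intros [H1 [H2 H3]]. split; [exact H1|split; [exact H2|]]. intros s Hs Ht.
    apply (same_rank_iff T' T s (A_Trw _ _ H1) (A_Trw _ _ HA)); auto.
    rewrite H2; auto.
  - intros [H1 [H2 H3]]. split; [exact H1|split; [exact H2|]]. intros s Hs Ht.
    apply (same_rank_iff T' T s (A_Trw _ _ H1) (A_Trw _ _ HA)); auto.
    rewrite H2; auto.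
Qed.

Lemma U_A alpha n T T' : U alpha n T T' -> A alpha T'. Proof. intros [H _]; exact H. Qed.

Lemma U_self alpha n T : A alpha T -> U alpha n T T.
Proof. intro HA. apply U_char; auto. split; [exact HA|split]; auto. intros; apply eqo_refl. Qed.

Lemma U_mono alpha n n' T : A alpha T -> n <= n' -> subset (U alpha n' T) (U alpha n T).
Proof.
  intros HA Hn T' H. apply U_char in H; auto. apply U_char; auto.
  destruct H as [H1 [H2 H3]]. split; [exact H1|split]; intros s Hs; [apply H2|apply H3];
  eapply small_mono; eauto.
Qed.

Lemma U_trans alpha n T T' : A alpha T -> U alpha n T T' -> subset (U alpha n T') (U alpha n T).
Proof.
  intros HA H T'' H'. pose proof (U_A _ _ _ _ H) as HA'.
  apply U_char in H; auto. apply U_char in H'; auto. apply U_char; auto.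
  destruct H as [H1 [H2 H3]], H' as [H1' [H2' H3']].
  split; [exact H1'|split].
  - intros s Hs. rewrite H2', H2; auto.
  - intros s Hs Ht. eapply eqo_trans. apply H3'; auto. rewrite H2; auto. apply H3; auto.
Qed.

Lemma U_sym alpha n T T' : A alpha T -> U alpha n T T' -> U alpha n T' T.
Proof.
  intros HA H. pose proof (U_A _ _ _ _ H) as HA'.
  apply U_char in H; auto. apply U_char; auto.
  destruct H as [H1 [H2 H3]]. split; [exact HA|split].
  - intros s Hs. rewrite H2; auto.
  - intros s Hs Ht. apply eqo_sym, H3; auto. rewrite <- H2; auto.
Qed.

Lemma U_open alpha n T : A alpha T -> tau_open alpha (U alpha n T).
Proof.
  intro HA. split. intros T' H; eapply U_A; eauto.
  intros T' H. exists n. apply U_trans; auto.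
Qed.

Lemma tau_open_inter alpha O1 O2 : tau_open alpha O1 -> tau_open alpha O2 ->
  tau_open alpha (inter O1 O2).
Proof.
  intros [S1 H1] [S2 H2]. split. intros T [HT _]; auto.
  intros T [HT1 HT2]. destruct (H1 T HT1) as [n1 Hn1], (H2 T HT2) as [n2 Hn2].
  exists (max n1 n2). intros T' H'. split.
  - apply Hn1. eapply U_mono; [apply S1; auto| |exact H']. lia.
  - apply Hn2. eapply U_mono; [apply S1; auto| |exact H']. lia.
Qed.

Lemma tau_open_A alpha : tau_open alpha (A alpha).
Proof. split. intros T H; auto. intros T H. exists 0. intros T' H'. eapply U_A; eauto. Qed.

Lemma nd_subset alpha N N' : subset N N' -> nowhere_dense alpha N' -> nowhere_dense alpha N.
Proof.
  intros Hs Hn O HO Hne. destruct (Hn O HO Hne) as [O' [H1 [H2 [H3 H4]]]].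
  exists O'. split; [exact H1|split; [exact H2|split; [exact H3|]]]. intros T HT HN. apply (H4 T HT). auto.
Qed.

Lemma nd_empty alpha : nowhere_dense alpha (fun _ => False).
Proof. intros O HO Hne. exists O. split; [exact HO|split; [exact Hne|split]]. intros T H; exact H. intros T _ []. Qed.

Lemma meager_subset alpha M M' : subset M M' -> meager alpha M' -> meager alpha M.
Proof. intros Hs [N [H1 H2]]. exists N. split; auto. Qed.

Lemma meager_empty alpha : meager alpha (fun _ => False).
Proof. exists (fun _ _ => False). split. intro; apply nd_empty. intros T []. Qed.

Lemma meager_union alpha (M : nat -> pset) : (forall i, meager alpha (M i)) ->
  meager alpha (fun T => exists i, M i T).
Proof.
  intro H.
  set (Ni := fun i => epsilon (inhabits (fun (_ : nat) (_ : pt) => False))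
         (fun N => (forall n, nowhere_dense alpha (N n)) /\ forall T, M i T -> exists n, N n T)).
  assert (HN : forall i, (forall n, nowhere_dense alpha (Ni i n)) /\ forall T, M i T -> exists n, Ni i n T).
  { intro i. unfold Ni. apply epsilon_spec. apply H. }
  exists (fun k => let (i, j) := of_nat k in Ni i j). split.
  - intro k. destruct (of_nat k) as [i j]. apply HN.
  - intros T [i Hi]. destruct (proj2 (HN i) T Hi) as [j Hj]. exists (to_nat (i, j)).
    rewrite cancel_of_to. exact Hj.
Qed.

Lemma meager_union2 alpha M1 M2 : meager alpha M1 -> meager alpha M2 ->
  meager alpha (fun T => M1 T \/ M2 T).
Proof.
  intros H1 H2. eapply meager_subset; [|apply (meager_union alpha (fun i => match i with 0 => M1 | _ => M2 end))].
  - intros T [H|H]; [exists 0|exists 1]; exact H.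
  - intros [|i]; auto.
Qed.

Fixpoint words (n l : nat) : list (list nat) :=
  match l with
  | 0 => [[]]
  | S l => flat_map (fun w => map (fun a => a :: w) (seq 0 n)) (words n l)
  end.

Definition win n := flat_map (words n) (seq 0 (S n)).

Lemma In_words n l s : In s (words n l) <-> length s = l /\ Forall (fun k => k < n) s.
Proof.
  revert s. induction l as [|l IH]; intro s; simpl.
  - split. intros [<-|[]]. split; auto. intros [H _]. destruct s; [auto|discriminate].
  - rewrite in_flat_map. split.
    + intros [w [Hw Hs]]. apply in_map_iff in Hs. destruct Hs as [a [<- Ha]].
      apply in_seq in Ha. apply IH in Hw. destruct Hw. simpl. split. lia. constructor; auto; lia.
    + intros [Hl Hf]. destruct s as [|a w]; [discriminate|]. inversion Hf; subst.
      exists w. split. apply IH. split; auto. apply in_map_iff. exists a. split; auto.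
      apply in_seq. lia.
Qed.

Lemma In_win n s : In s (win n) <-> small n s.
Proof.
  unfold win, small. rewrite in_flat_map. split.
  - intros [l [Hl Hs]]. apply in_seq in Hl. apply In_words in Hs. destruct Hs. split; auto; lia.
  - intros [H1 H2]. exists (length s). split. apply in_seq; lia. apply In_words; auto.
Qed.

Lemma finite_bound {X : Type} (L : list X) (Q : X -> nat -> Prop) :
  (forall x n n', n <= n' -> Q x n -> Q x n') ->
  (forall x, In x L -> exists n, Q x n) -> exists n, forall x, In x L -> Q x n.
Proof.
  intros Hm. induction L as [|a L IH]; intro H.
  - exists 0. intros x [].
  - destruct (H a (or_introl eq_refl)) as [n1 H1]. destruct IH as [n2 H2].
    { intros x Hx. apply H. right; auto. }
    exists (max n1 n2). intros x [<-|Hx]. eapply Hm; [|exact H1]; lia.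
    eapply Hm; [|apply H2; auto]; lia.
Qed.

Definition sz (x : Ord) := x = OZ \/ exists y, x = OS y.

Definition Inv alpha (T : pt) (n : nat) (ref : list nat -> nat -> Ord) :=
  A alpha T /\ (forall s m, sz (ref s m)) /\
  forall s, small n s -> T s = true -> eqo (hT T s) (OL (ref s)).

Definition state := (pt * nat * (list nat -> nat -> Ord))%type.
Definition Tof (st : state) := fst (fst st).
Definition nof (st : state) := snd (fst st).
Definition rof (st : state) := snd st.

Definition stepP alpha (Nk : pset) (k : nat) (st st' : state) : Prop :=
  nof st < nof st' /\
  subset (U alpha (nof st') (Tof st')) (U alpha (nof st) (Tof st)) /\
  (forall T'', U alpha (nof st') (Tof st') T'' -> ~ Nk T'') /\
  (forall s, small (nof st) s -> rof st' s = rof st s) /\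
  Inv alpha (Tof st') (nof st') (rof st') /\
  (forall s m, small (nof st) s -> Tof st s = true -> m <= k ->
     exists m', small (nof st') (s ++ [m']) /\ leo (rof st s m) (term (Tof st') (hT (Tof st')) s m')).

Lemma term_sz T h s m : sz (term T h s m).
Proof. unfold term, sz. destruct (T (s ++ [m])); eauto. Qed.

Lemma small_snoc n s m : small n s -> m < S n -> small (S n) (s ++ [m]).
Proof.
  intros [H1 H2] Hm. split. rewrite length_app; simpl; lia.
  apply Forall_app. split. eapply Forall_impl; [|exact H2]; simpl; intros; lia. constructor; auto.
Qed.

Lemma step_ex alpha Nk k st : nowhere_dense alpha Nk -> Inv alpha (Tof st) (nof st) (rof st) ->
  exists st', stepP alpha Nk k st st'.
Proof.
  destruct st as [[T n] ref]. unfold Tof, nof, rof; simpl. intros Hnd [HA [Hsz HI]].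
  destruct (Hnd (U alpha n T) (U_open _ _ _ HA)) as [O' [[HO'A HO'n] [[T1 HT1] [Hsub Hdis]]]].
  { exists T. apply U_self; auto. }
  destruct (HO'n T1 HT1) as [m1 Hm1].
  assert (HU1 : U alpha n T T1) by auto.
  pose proof (U_A _ _ _ _ HU1) as HA1.
  pose proof (proj1 (U_char _ _ _ _ HA) HU1) as [_ [Hag Hrk]].
  set (Q := fun (x : list nat * nat) (n' : nat) => T (fst x) = true ->
        exists m', small n' (fst x ++ [m']) /\ leo (ref (fst x) (snd x)) (term T1 (hT T1) (fst x) m')).
  destruct (finite_bound (list_prod (win n) (seq 0 (S k))) Q) as [nb Hnb].
  { intros [s m] a b Hab HQ Hs. destruct (HQ Hs) as [m' [H1 H2]]. exists m'. split; auto.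
    eapply small_mono; eauto. }
  { intros [s m] Hin. apply in_prod_iff in Hin. destruct Hin as [Hs Hm].
    apply In_win in Hs. unfold Q; simpl.
    destruct (T s) eqn:ETs; [|exists 0; intro; discriminate].
    assert (Hle : leo (ref s m) (OL (term T1 (hT T1) s))).
    { eapply Ole_trans. eapply Ole_cocone. apply Ole_refl.
      eapply Ole_trans. apply (HI s Hs ETs).
      eapply Ole_trans. apply (Hrk s Hs ETs).
      apply (is_rank_eq T1 (hT T1) s (hT_rank _ (A_Trw _ _ HA1))). rewrite Hag; auto. }
    destruct (Hsz s m) as [E|[y E]]; rewrite E in *.
    - exists (bnd (s ++ [0])). intros _. exists 0. split. apply small_bnd. exact I.
    - rewrite Ole_OS, Olt_OL in Hle. destruct Hle as [i Hi].
      exists (bnd (s ++ [i])). intros _. exists i. split. apply small_bnd. exact Hi. }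
  set (n' := max nb (max m1 (S n))).
  set (ref' := fun s => if excluded_middle_informative (small n s) then ref s else term T1 (hT T1) s).
  exists (T1, n', ref'). unfold stepP, Tof, nof, rof; simpl.
  split; [lia|]. split.
  { intros T'' H. apply Hsub. apply Hm1. eapply U_mono; [exact HA1| |exact H]. lia. }
  split.
  { intros T'' H. apply Hdis. apply Hm1. eapply U_mono; [exact HA1| |exact H]. lia. }
  split.
  { intros s Hs. unfold ref'. destruct (excluded_middle_informative (small n s)); tauto. }
  split.
  { split; [exact HA1|split].
    - intros s m. unfold ref'. destruct (excluded_middle_informative (small n s)); auto. apply term_sz.
    - intros s Hs Ht. unfold ref'. destruct (excluded_middle_informative (small n s)) as [Hsn|Hsn].
      + rewrite Hag in Ht by auto. eapply eqo_trans. apply Hrk; auto. apply HI; auto.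
      + apply is_rank_eq; auto. apply hT_rank. apply A_Trw with alpha; auto. }
  intros s m Hs Ht Hm. assert (HQ : Q (s, m) nb). apply Hnb. apply in_prod_iff. split.
  apply In_win; auto. apply in_seq; lia.
  destruct (HQ Ht) as [m' [H1 H2]]. exists m'. split; auto. eapply small_mono; [|exact H1]. lia.
Qed.

Definition nxt alpha (N : nat -> pset) k (st : state) : state :=
  epsilon (inhabits st) (stepP alpha (N k) k st).
Fixpoint sq alpha N (st0 : state) k : state :=
  match k with 0 => st0 | S k => nxt alpha N k (sq alpha N st0 k) end.

Lemma sq_spec alpha N st0 : (forall k, nowhere_dense alpha (N k)) ->
  Inv alpha (Tof st0) (nof st0) (rof st0) ->
  forall k, Inv alpha (Tof (sq alpha N st0 k)) (nof (sq alpha N st0 k)) (rof (sq alpha N st0 k)) /\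
            stepP alpha (N k) k (sq alpha N st0 k) (sq alpha N st0 (S k)).
Proof.
  intros Hnd H0. assert (HS : forall k, Inv alpha (Tof (sq alpha N st0 k)) (nof (sq alpha N st0 k)) (rof (sq alpha N st0 k)) ->
     stepP alpha (N k) k (sq alpha N st0 k) (sq alpha N st0 (S k))).
  { intros k Hk. simpl. unfold nxt. apply epsilon_spec. apply step_ex; auto. }
  intro k. induction k as [|k IH].
  - split; auto.
  - destruct IH as [IH1 IH2]. assert (I1 := proj1 (proj2 (proj2 (proj2 (proj2 IH2))))).
    split; auto.
Qed.

Lemma is_rank_ext T h1 h2 : is_rank T h1 -> (forall s, T s = true -> eqo (h1 s) (h2 s)) -> is_rank T h2.
Proof.
  intros H E s Hs. apply oeq_iff. eapply eqo_trans. apply eqo_sym, E; auto.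
  eapply eqo_trans. apply (is_rank_eq T h1 s H Hs). apply OL_cong. intro k. unfold term.
  destruct (T (s ++ [k])) eqn:Ek; [|apply eqo_refl]. destruct (E _ Ek); split; auto.
Qed.

Lemma small_prefix n s t : small n (s ++ t) -> small n s.
Proof.
  intros [H1 H2]. rewrite length_app in H1. apply Forall_app in H2. split; [lia|tauto].
Qed.

Theorem baire alpha O (N : nat -> pset) : tau_open alpha O -> (exists T, O T) ->
  (forall k, nowhere_dense alpha (N k)) -> exists T, O T /\ forall k, ~ N k T.
Proof.
  intros [HOA HOn] [T0 HT0] Hnd. destruct (HOn T0 HT0) as [n0 Hn0].
  pose proof (HOA T0 HT0) as HA0.
  set (st0 := (T0, n0, term T0 (hT T0)) : state).
  assert (Hinv0 : Inv alpha (Tof st0) (nof st0) (rof st0)).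
  { unfold st0, Tof, nof, rof; simpl. split; [auto|split]. intros; apply term_sz.
    intros s _ Hs. apply is_rank_eq; auto. apply hT_rank, (A_Trw alpha); auto. }
  pose proof (sq_spec alpha N st0 Hnd Hinv0) as SP.
  set (Tk := fun k => Tof (sq alpha N st0 k)).
  set (nk := fun k => nof (sq alpha N st0 k)).
  set (rk := fun k => rof (sq alpha N st0 k)).
  assert (HAk : forall k, A alpha (Tk k)). { intro k. apply (proj1 (proj1 (SP k))). }
  assert (Hn_step : forall k, nk k < nk (S k)). { intro k. apply (proj1 (proj2 (SP k))). }
  assert (Hn_mono : forall j k, j <= k -> nk j <= nk k).
  { intros j k Hjk. induction Hjk. lia. specialize (Hn_step m). lia. }
  assert (Hn_ge : forall k, k <= nk k). { induction k. lia. specialize (Hn_step k). lia. }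
  assert (HU : forall j k, j <= k -> subset (U alpha (nk k) (Tk k)) (U alpha (nk j) (Tk j))).
  { intros j k Hjk. induction Hjk. intros T H; exact H.
    intros T H. apply IHHjk. destruct (proj2 (SP m)) as [_ [C2 _]]. apply C2. exact H. }
  assert (Hmem : forall j k, j <= k -> U alpha (nk j) (Tk j) (Tk k)).
  { intros j k Hjk. apply (HU j k Hjk). apply U_self; auto. }
  assert (Hr : forall j k s, j <= k -> small (nk j) s -> rk k s = rk j s).
  { intros j k s Hjk Hs. induction Hjk. reflexivity.
    unfold rk in *. rewrite <- IHHjk. destruct (proj2 (SP m)) as [_ [_ [_ [C4 _]]]]. apply C4. eapply small_mono; [|exact Hs]. apply Hn_mono; auto. }
  assert (Hagr : forall j k s, j <= k -> small (nk j) s ->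
     Tk k s = Tk j s /\ (Tk j s = true -> eqo (hT (Tk k) s) (hT (Tk j) s))).
  { intros j k s Hjk Hs. pose proof (proj1 (U_char _ _ _ _ (HAk j)) (Hmem j k Hjk)) as [_ [H1 H2]].
    split; auto. }
  assert (Hagr2 : forall j k s, small (nk j) s -> small (nk k) s ->
     Tk k s = Tk j s /\ (Tk j s = true -> eqo (hT (Tk k) s) (hT (Tk j) s))).
  { intros j k s Hj Hk. destruct (Nat.le_ge_cases j k) as [H|H]. apply Hagr; auto.
    destruct (Hagr k j s H Hk) as [E1 E2]. split; auto. intro Ht. apply eqo_sym, E2. congruence. }
  assert (Hsb : forall s, small (nk (bnd s)) s).
  { intro s. apply small_bnd_ge. apply Hn_ge. }
  set (Tf := fun s => Tk (bnd s) s).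
  set (hf := fun s => hT (Tk (bnd s)) s).
  assert (Tf_ag : forall j s, small (nk j) s -> Tf s = Tk j s).
  { intros j s Hs. unfold Tf. apply (Hagr2 j (bnd s) s); auto. }
  assert (hf_ag : forall j s, small (nk j) s -> Tf s = true -> eqo (hf s) (hT (Tk j) s)).
  { intros j s Hs Ht. unfold hf. apply (Hagr2 j (bnd s) s); auto. rewrite <- Tf_ag; auto. }
  assert (Hbig : forall s t, exists k, small (nk k) s /\ small (nk k) t).
  { intros s t. exists (max (bnd s) (bnd t)). split; apply small_bnd_ge;
    apply Nat.le_trans with (max (bnd s) (bnd t)); [lia|apply Hn_ge|lia|apply Hn_ge]. }
  assert (HTr : Tr Tf).
  { intros s t H. destruct (Hbig (s ++ t) s) as [k [H1 H2]].
    rewrite (Tf_ag k) in *; auto. eapply tree_prefix; [apply (A_Trw alpha), HAk|exact H]. }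
  assert (Hrank : is_rank Tf hf).
  { intros s Hs. apply oeq_iff. split.
    - set (j := bnd s). assert (Hsj : small (nk j) s) by apply Hsb.
      assert (Htj : Tk j s = true) by (rewrite <- Tf_ag; auto).
      pose proof (SP j) as [[_ [_ HI]] _].
      eapply Ole_trans. apply (proj1 (hf_ag j s Hsj Hs)).
      eapply Ole_trans. apply (proj1 (HI s Hsj Htj)).
      rewrite Ole_OL. intro m.
      set (k := max j m).
      assert (Hjk : j <= k) by lia.
      assert (Hsk : small (nk k) s). { eapply small_mono; [|exact Hsj]. apply Hn_mono; auto. }
      assert (Htk : Tk k s = true). { rewrite <- (Tf_ag k); auto. }
      fold (rk j). rewrite <- (Hr j k s Hjk Hsj).
      destruct (SP k) as [_ [_ [_ [_ [_ [_ Hbk]]]]]].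
      destruct (Hbk s m Hsk Htk ltac:(lia)) as [m' [Hsm' Hle]].
      eapply Ole_cocone with m'. eapply Ole_trans. exact Hle.
      fold (Tk (S k)). unfold term. rewrite <- (Tf_ag (S k) _ Hsm').
      destruct (Tf (s ++ [m'])) eqn:E; [|exact I].
      rewrite Ole_OS, Olt_OS. apply (hf_ag (S k) _ Hsm' E).
    - rewrite Ole_OL. intro m. unfold term. destruct (Tf (s ++ [m])) eqn:E; [|exact I].
      destruct (Hbig (s ++ [m]) s) as [k [H1 H2]].
      eapply Ole_trans with (OS (hT (Tk k) (s ++ [m]))).
      { rewrite Ole_OS, Olt_OS. apply (proj1 (hf_ag k _ H1 E)). }
      eapply Ole_trans. apply (is_rank_lt (Tk k)). apply hT_rank, (A_Trw alpha), HAk.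
      rewrite <- Tf_ag; auto. rewrite <- Tf_ag; auto.
      apply (proj2 (hf_ag k s H2 Hs)). }
  assert (HwTf : Trw Tf) by (apply is_rank_Trw with hf; auto).
  assert (Hroot : Tf [] = true).
  { rewrite (Tf_ag 0). apply HAk. split; simpl; [lia|constructor]. }
  assert (HAf : A alpha Tf).
  { split; [exact HwTf|split; [exact Hroot|]]. exists hf. split; auto. apply oeq_iff.
    eapply eqo_trans. apply (hf_ag 0); auto. split; simpl; [lia|constructor].
    apply (A_iff alpha (Tk 0)), HAk. }
  assert (HUf : forall j, U alpha (nk j) (Tk j) Tf).
  { intro j. apply U_char; auto. split; [exact HAf|split].
    - intros s Hs. apply Tf_ag; auto.
    - intros s Hs Ht. assert (Hf : Tf s = true) by (rewrite (Tf_ag j s Hs); auto).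
      eapply eqo_trans. apply (is_rank_unique Tf (hT Tf) hf HwTf (hT_rank Tf HwTf) Hrank s Hf).
      apply (hf_ag j s Hs Hf). }
  exists Tf. split.
  - apply Hn0. apply (HUf 0).
  - intro k. destruct (SP k) as [_ [_ [_ [Hdis _]]]]. apply Hdis. apply (HUf (S k)).
Qed.

Corollary open_not_meager alpha O : tau_open alpha O -> (exists T, O T) -> ~ meager alpha O.
Proof.
  intros HO Hne [N [HN Hcov]]. destruct (baire alpha O N HO Hne HN) as [T [HT HnT]].
  destruct (Hcov T HT) as [k Hk]. apply (HnT k Hk).
Qed.

Definition diffA alpha (B O : pset) : pset := fun T => A alpha T /\ ~ (B T <-> O T).

Definition lbnd (l : list (list nat)) : nat := fold_right (fun s acc => max (bnd s) acc) 0 l.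
Lemma lbnd_spec l s : In s l -> bnd s <= lbnd l.
Proof. induction l as [|a l IH]; simpl. tauto. intros [<-|H]. lia. specialize (IH H). lia. Qed.

Lemma open_tau alpha (V : pset) : is_open V -> tau_open alpha (fun T => A alpha T /\ V T).
Proof.
  intro HV. split. intros T [H _]; exact H.
  intros T [HA HVT]. destruct (HV T HVT) as [l Hl]. exists (lbnd l).
  intros T' H'. split. eapply U_A; eauto. apply Hl. intros s Hs.
  apply (proj1 (U_char _ _ _ _ HA) H'). apply small_bnd_ge. apply lbnd_spec; auto.
Qed.

Lemma BP_borel alpha B : borel B -> exists O, tau_open alpha O /\ meager alpha (diffA alpha B O).
Proof.
  induction 1 as [V HV|B HB [O [HO HM]]|F HF IH].
  - exists (fun T => A alpha T /\ V T). split. apply open_tau; auto.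
    eapply meager_subset; [|apply meager_empty]. intros T [HA Hd]. apply Hd. tauto.
  - set (Ostar := fun T => A alpha T /\ exists n, forall T', U alpha n T T' -> ~ O T').
    set (D := fun T => A alpha T /\ ~ O T /\ ~ Ostar T).
    exists Ostar. split.
    + split. intros T [H _]; exact H.
      intros T [HA [n Hn]]. exists n. intros T' H'. split. eapply U_A; eauto.
      exists n. intros T'' H''. apply Hn. eapply U_trans; eauto.
    + assert (HD : nowhere_dense alpha D).
      { intros V HV [T0 HT0]. destruct (classic (exists T, V T /\ O T)) as [[T1 [H1 H2]]|Hno].
        - exists (inter V O). split. apply tau_open_inter; auto. split. exists T1; split; auto.
          split. intros T [HT _]; exact HT. intros T [_ HTO] [_ [HnO _]]. auto.
        - exists V. split; auto. split. exists T0; auto. split. intros T HT; exact HT.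
          intros T HT [HA [_ HnOs]]. apply HnOs. split; auto. destruct HV as [_ HV].
          destruct (HV T HT) as [n Hn]. exists n. intros T' H' HO'. apply Hno. exists T'. auto. }
      assert (HDm : meager alpha D).
      { exists (fun _ => D). split; auto. intros T HT; exists 0; exact HT. }
      eapply meager_subset; [|apply (meager_union2 alpha _ _ HM HDm)].
      intros T [HA Hd]. destruct (classic (B T)) as [HBT|HBT]; destruct (classic (O T)) as [HOT|HOT].
      * exfalso. apply Hd. split. tauto.
        intros [_ [n Hn]]. exfalso. apply (Hn T); auto. apply U_self; auto.
      * left. split; auto. tauto.
      * left. split; auto. tauto.
      * right. split; auto. split; auto. intros Hs. apply Hd. tauto.
  - set (On := fun n => epsilon (inhabits (fun _ : pt => False))
       (fun O => tau_open alpha O /\ meager alpha (diffA alpha (F n) O))).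
    assert (HOn : forall n, tau_open alpha (On n) /\ meager alpha (diffA alpha (F n) (On n))).
    { intro n. unfold On. apply epsilon_spec. apply IH. }
    exists (fun T => exists n, On n T). split.
    + split. intros T [n Hn]. apply (proj1 (proj1 (HOn n))); auto.
      intros T [n Hn]. destruct (proj2 (proj1 (HOn n)) T Hn) as [m Hm]. exists m.
      intros T' H'. exists n. auto.
    + eapply meager_subset; [|apply (meager_union alpha (fun n => diffA alpha (F n) (On n)))].
      2:{ intro n. apply HOn. }
      intros T [HA Hd]. destruct (classic (exists n, F n T)) as [[n Hn]|Hn].
      * exists n. split; auto. intros [H1 H2]. apply Hd. split; eauto.
      * destruct (classic (exists n, On n T)) as [[n Hn2]|Hn2]; [|exfalso; apply Hd; tauto].
        exists n. split; auto. intros [H1 H2]. apply Hn. eauto.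
Qed.

Lemma nonmeager_local alpha B : borel B -> ~ meager alpha (fun T => B T /\ A alpha T) ->
  exists T n, A alpha T /\ meager alpha (fun T' => U alpha n T T' /\ ~ B T').
Proof.
  intros HB Hnm. destruct (BP_borel alpha B HB) as [O [[HOA HOn] HM]].
  destruct (classic (exists T, O T)) as [[T HT]|Hno].
  - destruct (HOn T HT) as [n Hn]. exists T, n. split; auto.
    eapply meager_subset; [|exact HM]. intros T' [H1 H2]. split. eapply U_A; eauto.
    intros [_ H]. apply H2, H, Hn, H1.
  - exfalso. apply Hnm. eapply meager_subset; [|exact HM]. intros T [H1 H2]. split; auto.
    intros [H _]. apply Hno. exists T. auto.
Qed.

Lemma borel_ext B B' : borel B -> (forall x, B x <-> B' x) -> borel B'.
Proof.
  intros H E. replace B' with B; auto. apply functional_extensionality. intro x.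
  apply propositional_extensionality. apply E.
Qed.

Lemma borel_empty : borel (fun _ => False).
Proof. apply borel_open. intros x []. Qed.

Lemma borel_inter (F : nat -> pset) : (forall n, borel (F n)) -> borel (fun x => forall n, F n x).
Proof.
  intro H. eapply borel_ext. apply borel_compl. apply borel_union. intro n. apply borel_compl. apply H.
  intro x. split. intros Hn n. apply NNPP. intro H'. apply Hn. eauto.
  intros Hn [n Hn']. apply Hn', Hn.
Qed.

Lemma borel_or B1 B2 : borel B1 -> borel B2 -> borel (fun x => B1 x \/ B2 x).
Proof.
  intros H1 H2. eapply borel_ext. apply (borel_union (fun n => match n with 0 => B1 | _ => B2 end)).
  intros [|n]; auto. intro x. split. intros [[|n] Hn]; auto. intros [H|H]; [exists 0|exists 1]; auto.
Qed.

Lemma borel_and B1 B2 : borel B1 -> borel B2 -> borel (fun x => B1 x /\ B2 x).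
Proof.
  intros H1 H2. eapply borel_ext. apply (borel_inter (fun n => match n with 0 => B1 | _ => B2 end)).
  intros [|n]; auto. intro x. split. intro H. split; [apply (H 0)|apply (H 1)]. intros [] [|n]; auto.
Qed.

Lemma borel_coord s b : borel (fun x : pt => x s = b).
Proof. apply borel_open. intros x Hx. exists [s]. intros y Hy. rewrite Hy; simpl; auto. Qed.

Lemma borel_Tr_set : borel Tr.
Proof.
  eapply borel_ext. apply borel_compl. apply (borel_open (fun T => exists s t, T (s ++ t) = true /\ T s = false)).
  - intros T [s [t [H1 H2]]]. exists [s ++ t; s]. intros y Hy. exists s, t.
    rewrite (Hy (s ++ t)), (Hy s); simpl; auto.
  - intro T. unfold Tr. split.
    + intros H s t H1. destruct (T s) eqn:E; auto. exfalso. apply H. eauto.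
    + intros H [s [t [H1 H2]]]. rewrite (H s t H1) in H2. discriminate.
Qed.

Lemma mk_A T h alpha : Tr T -> is_rank T h -> T [] = true -> eqo (h []) alpha ->
  A alpha T /\ forall s, T s = true -> eqo (hT T s) (h s).
Proof.
  intros HT Hr H0 Ha. assert (Hw : Trw T) by (eapply is_rank_Trw; eauto).
  split. split; [exact Hw|split; [exact H0|]]. exists h. split; auto. apply oeq_iff; auto.
  intros s Hs. apply is_rank_unique with T; auto. apply hT_rank; auto.
Qed.

Definition islim (f : nat -> Ord) := forall k, exists k', lto (f k) (f k').
Definition k0 (f : nat -> Ord) := epsilon (inhabits 0) (fun k0 => forall k', ~ lto (f k0) (f k')).

Fixpoint ch (a : Ord) (k : nat) : option Ord :=
  match a with
  | OZ => None
  | OS b => if Nat.eqb k 0 then Some b else None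
  | OL f => if excluded_middle_informative (islim f) then Some (f k) else ch (f (k0 f)) k
  end.

Fixpoint mem (a : Ord) (s : list nat) : bool :=
  match s with [] => true | k :: s' => match ch a k with Some b => mem b s' | None => false end end.
Fixpoint hmk (a : Ord) (s : list nat) : Ord :=
  match s with [] => a | k :: s' => match ch a k with Some b => hmk b s' | None => OZ end end.

Definition chterm a k := match ch a k with Some b => OS b | None => OZ end.

Lemma root_eq a : eqo a (OL (chterm a)).
Proof.
  unfold chterm. induction a as [|b IH|f IH]; simpl.
  - split. exact I. rewrite Ole_OL. intro; exact I.
  - split. apply Ole_cocone with 0. simpl. apply Ole_refl.
    rewrite Ole_OL. intros [|k]; simpl. apply Ole_refl. exact I.
  - destruct (excluded_middle_informative (islim f)) as [Hl|Hl].
    + split; rewrite Ole_OL; intro k.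
      * apply Ole_cocone with k. apply Olt_le, Olt_succ.
      * destruct (Hl k) as [k' Hk']. apply Ole_cocone with k'. exact Hk'.
    + assert (Hk0 : forall k', ~ lto (f (k0 f)) (f k')).
      { unfold k0. apply epsilon_spec. apply NNPP. intro H. apply Hl. intro k.
        apply NNPP. intro H2. apply H. exists k. intros k' H3. apply H2. eauto. }
      eapply eqo_trans; [|apply IH]. split.
      * rewrite Ole_OL. intro k. destruct (Ole_lt_total (f k) (f (k0 f))); auto.
        exfalso. eapply Hk0; eauto.
      * apply Ole_cocone with (k0 f). apply Ole_refl.
Qed.

Lemma mem_tree a : Tr (mem a).
Proof.
  intros s t. revert a. induction s as [|k s IH]; intros a H; simpl; auto.
  simpl in H. destruct (ch a k); auto.
Qed.

Lemma mem_rank a : is_rank (mem a) (hmk a).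
Proof.
  intros s. revert a. induction s as [|k s IH]; intros a Hs.
  - apply oeq_iff. eapply eqo_trans. apply root_eq. apply OL_cong. intro n.
    unfold chterm. simpl. destruct (ch a n); apply eqo_refl.
  - simpl in Hs. simpl. destruct (ch a k) as [b|] eqn:E; [|discriminate].
    apply (IH b Hs).
Qed.

Lemma A_nonempty alpha : exists T, A alpha T.
Proof.
  exists (mem alpha). apply (mk_A _ (hmk alpha)). apply mem_tree. apply mem_rank. reflexivity.
  apply eqo_refl.
Qed.

Lemma A_tau_open_ne alpha : tau_open alpha (A alpha) /\ exists T, A alpha T.
Proof. split. apply tau_open_A. apply A_nonempty. Qed.

Lemma not_meager_A alpha : ~ meager alpha (A alpha).
Proof. apply open_not_meager. apply tau_open_A. apply A_nonempty. Qed.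

Definition g (n N : nat) : option nat :=
  if N <? n then Some N else if Nat.even (N - n) then Some (n + Nat.div2 (N - n)) else None.
Definition ginv (n m : nat) : nat := if m <? n then m else n + 2 * (m - n).

Lemma g_inv n m : g n (ginv n m) = Some m.
Proof.
  unfold g, ginv. destruct (m <? n) eqn:E.
  - rewrite E. reflexivity.
  - apply Nat.ltb_ge in E. destruct (n + 2 * (m - n) <? n) eqn:E2. apply Nat.ltb_lt in E2; lia.
    replace (n + 2 * (m - n) - n) with (2 * (m - n)) by lia.
    rewrite Nat.even_even, Nat.div2_double. f_equal. lia.
Qed.
Lemma g_small n N : N < n -> g n N = Some N.
Proof. intro H. unfold g. apply Nat.ltb_lt in H. rewrite H. reflexivity. Qed.
Lemma g_none n : g n (S n) = None.
Proof.
  unfold g. destruct (S n <? n) eqn:E. apply Nat.ltb_lt in E; lia.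
  replace (S n - n) with 1 by lia. reflexivity.
Qed.

Lemma small_cons n N r : small n (N :: r) -> N < n.
Proof. intros [_ H]. inversion H; auto. Qed.

Lemma lt0_OS1 alpha : lto OZ alpha -> leo (OS OZ) alpha. Proof. auto. Qed.

Lemma exists_other alpha n T : lto OZ alpha -> A alpha T -> exists T', U alpha n T T' /\ T' <> T.
Proof.
  intros Hpos HA. pose proof HA as HA'. apply A_iff in HA' as [Hw [H0 Ha]].
  pose proof (hT_rank T Hw) as Hr. pose proof (proj1 Hw) as HTr.
  destruct (classic (exists N, n <= N /\ T [N] = false)) as [[N [HN HTN]]|Hall].
  - set (T' := fun s => if list_eq_dec Nat.eq_dec s [N] then true else T s).
    set (h' := fun s => if list_eq_dec Nat.eq_dec s [N] then OZ else hT T s).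
    assert (HTr' : Tr T').
    { intros s t H. unfold T' in *. destruct (list_eq_dec Nat.eq_dec (s ++ t) [N]) as [E|E].
      - apply app_eq_unit in E. destruct E as [[-> _]|[-> _]].
        + destruct (list_eq_dec Nat.eq_dec [] [N]); auto.
        + destruct (list_eq_dec Nat.eq_dec [N] [N]); auto.
      - destruct (list_eq_dec Nat.eq_dec s [N]); auto. eapply tree_prefix; eauto. }
    assert (Hr' : is_rank T' h').
    { intros s Hs. apply oeq_iff. unfold T' in Hs.
      destruct (list_eq_dec Nat.eq_dec s [N]) as [->|Ne].
      - unfold h'. destruct (list_eq_dec Nat.eq_dec [N] [N]) as [_|C]; [|congruence].
        split. exact I. rewrite Ole_OL. intro m. unfold T'.
        destruct (list_eq_dec Nat.eq_dec ([N] ++ [m]) [N]) as [C|_]. discriminate.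
        destruct (T ([N] ++ [m])) eqn:E; [|exact I].
        apply (tree_prefix T) in E; auto. congruence.
      - assert (Hhs : h' s = hT T s). { unfold h'. destruct (list_eq_dec Nat.eq_dec s [N]); congruence. }
        rewrite Hhs. eapply eqo_trans. apply (is_rank_eq T (hT T) s Hr Hs).
        destruct s as [|a r].
        + assert (Hpos' : lto OZ (OL (term T (hT T) []))).
          { eapply Olt_le_trans. exact Hpos. eapply Ole_trans. apply (proj2 Ha).
            apply (is_rank_eq T (hT T) [] Hr H0). }
          split; apply OL_le; intro m.
          * exists m. unfold term, T', h'. change ([] ++ [m]) with [m].
            destruct (list_eq_dec Nat.eq_dec [m] [N]) as [E|E].
            -- inversion E; subst. rewrite HTN. exact I.
            -- destruct (T [m]); apply Ole_refl.
          * unfold T', h'. change ([] ++ [m]) with [m]. destruct (list_eq_dec Nat.eq_dec [m] [N]) as [E|E].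
            -- rewrite Olt_OL in Hpos'. destruct Hpos' as [k Hk]. exists k. exact Hk.
            -- exists m. unfold term. change ([] ++ [m]) with [m]. destruct (T [m]); apply Ole_refl.
        + apply OL_cong. intro m. unfold term, T', h'.
          destruct (list_eq_dec Nat.eq_dec ((a :: r) ++ [m]) [N]) as [E|E].
          * exfalso. simpl in E. inversion E. destruct r; discriminate.
          * apply eqo_refl. }
    assert (H0' : T' [] = true). { unfold T'. destruct (list_eq_dec Nat.eq_dec [] [N]); auto. }
    assert (Hh0 : eqo (h' []) alpha).
    { unfold h'. destruct (list_eq_dec Nat.eq_dec [] [N]). discriminate. exact Ha. }
    destruct (mk_A T' h' alpha HTr' Hr' H0' Hh0) as [HA' Hhh].
    assert (Hsm : forall s, small n s -> s <> [N]).
    { intros s Hs ->. apply small_cons in Hs. lia. }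
    exists T'. split.
    + apply U_char; auto. split; [exact HA'|split].
      * intros s Hs. unfold T'. destruct (list_eq_dec Nat.eq_dec s [N]); auto. exfalso; apply (Hsm s); auto.
      * intros s Hs Ht. eapply eqo_trans. apply Hhh. unfold T'.
        destruct (list_eq_dec Nat.eq_dec s [N]); auto.
        unfold h'. destruct (list_eq_dec Nat.eq_dec s [N]). exfalso; apply (Hsm s); auto. apply eqo_refl.
    + intro E. assert (T' [N] = T [N]) by (rewrite E; auto). unfold T' in H.
      destruct (list_eq_dec Nat.eq_dec [N] [N]); congruence.
  - assert (HB : forall N, n <= N -> T [N] = true).
    { intros N HN. destruct (T [N]) eqn:E; auto. exfalso. apply Hall. eauto. }
    set (T' := fun s => match s with [] => true | N :: r =>
                 match g n N with Some N' => T (N' :: r) | None => false end end).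
    set (h' := fun s => match s with [] => hT T [] | N :: r =>
                 match g n N with Some N' => hT T (N' :: r) | None => OZ end end).
    assert (HTr' : Tr T').
    { intros [|N r] t H; simpl in *; auto. destruct (g n N) as [N'|]; [|discriminate].
      apply (tree_prefix T (N' :: r) t); auto. }
    assert (Hr' : is_rank T' h').
    { intros [|N r] Hs; apply oeq_iff.
      - simpl. eapply eqo_trans. apply (is_rank_eq T (hT T) [] Hr H0).
        split; apply OL_le; intro m.
        + exists (ginv n m). unfold term. simpl. rewrite g_inv. apply Ole_refl.
        + simpl. destruct (g n m) as [N'|].
          * exists N'. unfold term. simpl. apply Ole_refl.
          * exists 0. exact I.
      - simpl in Hs |- *. destruct (g n N) as [N'|] eqn:E; [|discriminate].
        eapply eqo_trans. apply (is_rank_eq T (hT T) (N' :: r) Hr Hs).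
        apply OL_cong. intro m. unfold term, T', h'. simpl. try rewrite E. apply eqo_refl. }
    destruct (mk_A T' h' alpha HTr' Hr' eq_refl Ha) as [HA' Hhh].
    exists T'. split.
    + apply U_char; auto. split; [exact HA'|split].
      * intros [|N r] Hs; simpl; auto. rewrite g_small; auto. eapply small_cons; eauto.
      * intros s Hs Ht. eapply eqo_trans. apply Hhh.
        { destruct s as [|N r]; simpl; auto. rewrite g_small; auto. eapply small_cons; eauto. }
        destruct s as [|N r]; simpl. apply eqo_refl. rewrite g_small. apply eqo_refl. eapply small_cons; eauto.
    + intro E. assert (T' [S n] = T [S n]) by (rewrite E; auto). simpl in H. rewrite g_none in H.
      rewrite HB in H; [discriminate|lia].
Qed.

Lemma nd_singleton alpha T : lto OZ alpha -> nowhere_dense alpha (fun T' => T' = T).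
Proof.
  intros Hpos O HO [T0 HT0]. destruct (classic (O T)) as [HOT|HOT].
  - pose proof (proj1 HO T HOT) as HA. destruct (proj2 HO T HOT) as [n Hn].
    destruct (exists_other alpha n T Hpos HA) as [T' [HU Hne]].
    assert (Hs : exists s, T' s <> T s).
    { apply NNPP. intro H. apply Hne. apply functional_extensionality. intro s.
      apply NNPP. intro H2. apply H. eauto. }
    destruct Hs as [s Hs]. pose proof (U_A _ _ _ _ HU) as HA'.
    exists (U alpha (max n (bnd s)) T'). split. apply U_open; auto. split. exists T'. apply U_self; auto.
    split.
    + intros T'' H. apply Hn. eapply U_trans; [exact HA|exact HU|]. eapply U_mono; [exact HA'| |exact H]. lia.
    + intros T'' H E. subst T''. apply Hs. destruct (proj1 (U_char _ _ _ _ HA') H) as [_ [Hag _]].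
      symmetry. apply Hag. apply small_bnd_ge. lia.
  - exists O. split; auto. split. eauto. split. intros x Hx; exact Hx. intros T' HT' ->. auto.
Qed.

Lemma Istar_sigma : sigma_ideal_on_Tr Istar.
Proof.
  split; [|split; [|split]].
  - intros X [B [[_ HB] [HX _]]] T HT. auto.
  - exists (fun _ => False). split. split. apply borel_empty. intros x [].
    split. intros x []. intros alpha _. eapply meager_subset; [|apply meager_empty]. intros T [[] _].
  - intros X Y [B [HB [HY HM]]] HXY. exists B. split; auto. split; auto. intros x Hx; auto.
  - intros F HF.
    set (Bn := fun n => epsilon (inhabits (fun _ : pt => False))
       (fun B => borel_Tr B /\ subset (F n) B /\ forall alpha, olt OZ alpha -> meager alpha (fun T => B T /\ A alpha T))).
    assert (HB : forall n, borel_Tr (Bn n) /\ subset (F n) (Bn n) /\ forall alpha, olt OZ alpha -> meager alpha (fun T => Bn n T /\ A alpha T)).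
    { intro n. unfold Bn. apply epsilon_spec. apply HF. }
    exists (fun T => exists n, Bn n T). split; [split|split].
    + apply borel_union. intro n. apply (HB n).
    + intros T [n Hn]. apply (proj2 (proj1 (HB n))); auto.
    + intros T [n Hn]. exists n. apply (HB n); auto.
    + intros alpha Ha. eapply meager_subset; [|apply (meager_union alpha (fun n T => Bn n T /\ A alpha T))].
      * intros T [[n Hn] HA]. exists n. auto.
      * intro n. apply (HB n); auto.
Qed.

Lemma Istar_borel_generated : borel_generated Istar.
Proof.
  intros X [B [HB [HX HM]]]. exists B. split; auto. split; auto.
  exists B. split; auto. split; auto. intros x Hx; auto.
Qed.

Lemma olt_one : olt OZ (OS OZ).
Proof. apply olt_iff. exact I. Qed.

Lemma Istar_nontrivial : nontrivial Istar.
Proof.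
  split.
  - intros [B [HB [HTr HM]]]. apply (not_meager_A (OS OZ)).
    eapply meager_subset; [|apply (HM _ olt_one)]. intros T HT. split; auto.
    apply HTr. apply (proj1 (A_Trw _ _ HT)).
  - intros T HT. exists (fun T' => T' = T). split; [split|split].
    + eapply borel_ext. apply borel_compl. apply (borel_open (fun T' => T' <> T)).
      * intros x Hx. assert (Hs : exists s, x s <> T s).
        { apply NNPP. intro H. apply Hx. apply functional_extensionality. intro s.
          apply NNPP. intro H2. apply H. eauto. }
        destruct Hs as [s Hs]. exists [s]. intros y Hy E. subst y. apply Hs. symmetry. apply Hy. left; auto.
      * intro x. split. intro H. apply NNPP. exact H. intros -> H. apply H; auto.
    + intros x ->. exact HT.
    + intros x Hx; exact Hx.
    + intros alpha Ha. exists (fun _ T' => T' = T). split.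
      * intro. apply nd_singleton. apply olt_iff; auto.
      * intros T' [H _]. exists 0. exact H.
Qed.

Fixpoint RLt (b : Ord) : list nat -> pt -> Prop :=
  match b with
  | OZ => fun _ _ => False
  | OS b' => fun s T => forall m, T (s ++ [m]) = true -> RLt b' (s ++ [m]) T
  | OL f => fun s T => exists k, RLt (f k) s T
  end.
Definition RLe b s T := forall m, T (s ++ [m]) = true -> RLt b (s ++ [m]) T.

Lemma borel_impl (s : list nat) (b : bool) : forall P : pset, borel P -> borel (fun T => T s = true -> P T).
Proof.
  intros P HP. eapply borel_ext. apply (borel_or _ _ (borel_coord s false) HP).
  intro T. split. intros [H|H] H'; auto; congruence.
  intro H. destruct (T s) eqn:E; auto.
Qed.

Lemma RLt_borel b : forall s, borel (RLt b s).
Proof.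
  induction b as [|b IH|f IH]; intro s; simpl.
  - apply borel_empty.
  - apply (borel_inter (fun m T => T (s ++ [m]) = true -> RLt b (s ++ [m]) T)). intro m.
    apply (borel_impl (s ++ [m]) true). apply IH.
  - apply (borel_union (fun k => RLt (f k) s)). intro k. apply IH.
Qed.

Lemma RLe_borel b s : borel (RLe b s).
Proof.
  apply (borel_inter (fun m T => T (s ++ [m]) = true -> RLt b (s ++ [m]) T)). intro m.
  apply (borel_impl (s ++ [m]) true). apply RLt_borel.
Qed.

Lemma RLe_aux T b : Trw T -> forall s, T s = true ->
  (forall m, T (s ++ [m]) = true -> (RLt b (s ++ [m]) T <-> lto (hT T (s ++ [m])) b)) ->
  (RLe b s T <-> leo (hT T s) b).
Proof.
  intros Hw s Hs IH. pose proof (is_rank_eq T (hT T) s (hT_rank T Hw) Hs) as [E1 E2]. split.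
  - intro H. eapply Ole_trans. exact E1. rewrite Ole_OL. intro m. unfold term.
    destruct (T (s ++ [m])) eqn:Em; [|exact I]. apply IH; auto.
  - intros H m Hm. apply IH; auto. pose proof (Ole_trans _ _ _ E2 H) as H2.
    apply (Ole_OL_elim _ _ m) in H2. unfold term in H2. rewrite Hm in H2. exact H2.
Qed.

Lemma RLt_iff T b : Trw T -> forall s, T s = true -> (RLt b s T <-> lto (hT T s) b).
Proof.
  intro Hw. induction b as [|b IH|f IH]; intros s Hs.
  - simpl. split. tauto. apply Olt_OZ.
  - rewrite Olt_OS. apply (RLe_aux T b Hw s Hs). intros m Hm. apply IH; auto.
  - rewrite Olt_OL. simpl. split; intros [k Hk]; exists k; apply IH; auto.
Qed.

Lemma RLe_iff T b s : Trw T -> T s = true -> (RLe b s T <-> leo (hT T s) b).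
Proof. intros Hw Hs. apply RLe_aux; auto. intros. apply RLt_iff; auto. Qed.

Lemma RL_mono a : (forall b, leo a b -> forall s T, RLt a s T -> RLt b s T) /\
                  (forall b, lto a b -> forall s T, RLe a s T -> RLt b s T).
Proof.
  induction a as [|a IH|f IH].
  - split. intros b _ s T []. intro b. induction b as [|b IHb|g IHg]; intros Hab s T H.
    + destruct (Olt_OZ _ Hab).
    + intros m Hm. destruct (H m Hm).
    + rewrite Olt_OL in Hab. destruct Hab as [k Hk]. exists k. eapply IHg; eauto.
  - assert (P : forall b, leo (OS a) b -> forall s T, RLt (OS a) s T -> RLt b s T).
    { intros b Hab s T H. apply (proj2 IH b); auto. }
    split; auto. intro b. induction b as [|b IHb|g IHg]; intros Hab s T H.
    + destruct (Olt_OZ _ Hab).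
    + rewrite Olt_OS in Hab. intros m Hm. apply (P b Hab). apply H; auto.
    + rewrite Olt_OL in Hab. destruct Hab as [k Hk]. exists k. eapply IHg; eauto.
  - assert (P : forall b, leo (OL f) b -> forall s T, RLt (OL f) s T -> RLt b s T).
    { intros b Hab s T [k Hk]. apply (proj1 (IH k) b); [apply Hab|exact Hk]. }
    split; auto. intro b. induction b as [|b IHb|g IHg]; intros Hab s T H.
    + destruct (Olt_OZ _ Hab).
    + rewrite Olt_OS in Hab. intros m Hm. apply (P b Hab). apply H; auto.
    + rewrite Olt_OL in Hab. destruct Hab as [k Hk]. exists k. eapply IHg; eauto.
Qed.

Definition D (a : Ord) : pset := fun T => Tr T /\ T [] = true /\ RLe a [] T /\ ~ RLt a [] T.

Lemma D_borel a : borel_Tr (D a).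
Proof.
  split. 2: intros T [H _]; exact H.
  apply borel_and. apply borel_Tr_set. apply borel_and. apply borel_coord.
  apply borel_and. apply RLe_borel. apply borel_compl. apply RLt_borel.
Qed.

Lemma A_D a T : A a T -> D a T.
Proof.
  intro H. apply A_iff in H as [Hw [H0 [E1 E2]]]. split; [apply Hw|split; [exact H0|split]].
  - apply RLe_iff; auto.
  - rewrite RLt_iff by auto. intro H. apply (Olt_irrefl a). eapply Ole_lt_trans; eauto.
Qed.

Lemma D_disj a b T : ~ eqo a b -> D a T -> D b T -> False.
Proof.
  intros Hne [_ [_ [Ha Ha']]] [_ [_ [Hb Hb']]].
  destruct (Ole_lt_total a b) as [H|H].
  - destruct (classic (leo b a)) as [H2|H2]. apply Hne; split; auto.
    apply not_le_lt in H2. apply Hb'. apply (proj2 (RL_mono a) b H2); auto.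
  - apply Ha'. apply (proj2 (RL_mono b) a H); auto.
Qed.

Lemma D_not_Istar a : olt OZ a -> ~ Istar (D a).
Proof.
  intros Ha [B [HB [HDB HM]]]. apply (not_meager_A a). eapply meager_subset; [|apply (HM a Ha)].
  intros T HT. split; auto. apply HDB. apply A_D; auto.
Qed.

Definition rep (a : Ord) : Ord := epsilon (inhabits OZ) (fun x => eqo x a).
Lemma rep_eqo a : eqo (rep a) a.
Proof. unfold rep. apply epsilon_spec. exists a. apply eqo_refl. Qed.
Lemma rep_eq a b : eqo a b -> rep a = rep b.
Proof.
  intro E. unfold rep. f_equal. apply functional_extensionality. intro x.
  apply propositional_extensionality. split; intro H; eapply eqo_trans; eauto using eqo_sym.
Qed.

Definition Jt := {a : Ord | olt OZ a /\ rep a = a}.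

Lemma not_ccc : ~ ccc Istar.
Proof.
  intro Hc. destruct (Hc Jt (fun j => D (proj1_sig j))) as [g Hg].
  - intro j. split. apply D_borel. apply D_not_Istar. apply (proj2_sig j).
  - intros [a [Ha Hra]] [b [Hb Hrb]] Hne T [H1 H2]. simpl in *. apply (D_disj a b T); auto.
    intro E. apply Hne. pose proof (rep_eq a b E). assert (a = b) by congruence. subst b.
    f_equal. apply proof_irrelevance.
  - set (elem := fun n => epsilon (inhabits OZ) (fun a => exists j : Jt, g j = n /\ proj1_sig j = a)).
    set (sigma := OS (OL (fun n => OS (elem n)))).
    assert (Hr1 : olt OZ (rep sigma)).
    { apply olt_iff. eapply Olt_le_trans; [|apply (proj2 (rep_eqo sigma))]. exact I. }
    assert (Hr2 : rep (rep sigma) = rep sigma) by (apply rep_eq, rep_eqo).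
    set (js := exist _ (rep sigma) (conj Hr1 Hr2) : Jt).
    assert (He : exists j : Jt, g j = g js /\ proj1_sig j = elem (g js)).
    { unfold elem. apply epsilon_spec. exists (proj1_sig js). exists js. auto. }
    destruct He as [j [Hj1 Hj2]]. apply Hg in Hj1. subst j. simpl in Hj2.
    apply (Olt_irrefl (rep sigma)).
    eapply Olt_le_trans; [|apply (proj2 (rep_eqo sigma))].
    unfold sigma at 2. rewrite Olt_OS. apply Olt_le. rewrite Olt_OL. exists (g js).
    rewrite <- Hj2. apply Olt_succ.
Qed.

Fixpoint en (a : Ord) (k : nat) : Ord :=
  match a with
  | OZ => OZ
  | OS b => match k with 0 => OS b | S k => en b k end
  | OL f => match k with 0 => OL f | S k => let (i, j) := of_nat k in en (f i) j end
  end.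

Lemma en_spec a : forall b, leo b a -> exists k, eqo b (en a k).
Proof.
  induction a as [|a IH|f IH]; intros b H.
  - exists 0. split; auto. exact I.
  - destruct (classic (leo b a)) as [H1|H1].
    + destruct (IH b H1) as [k Hk]. exists (S k). exact Hk.
    + exists 0. split; auto. apply not_le_lt in H1. exact H1.
  - destruct (classic (exists i, leo b (f i))) as [[i Hi]|Hn].
    + destruct (IH i b Hi) as [j Hj]. exists (S (to_nat (i, j))).
      change (en (OL f) (S (to_nat (i, j)))) with (let (i0, j0) := of_nat (to_nat (i, j)) in en (f i0) j0).
      rewrite cancel_of_to. exact Hj.
    + exists 0. split; [exact H|]. change (leo (OL f) b). rewrite Ole_OL. intro i. apply Olt_le, not_le_lt. intro; apply Hn; eauto.
Qed.

Definition code (a b : Ord) : nat := epsilon (inhabits 0) (fun k => eqo b (en a k)).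
Lemma code_spec a b : leo b a -> eqo b (en a (code a b)).
Proof. intro H. unfold code. apply epsilon_spec. apply en_spec; auto. Qed.

Definition data (a : Ord) (n : nat) (T : pt) : list nat :=
  map (fun s => if T s then S (code (rep a) (hT T s)) else 0) (win n).

Lemma map_eq_in {X Y} (f1 f2 : X -> Y) l : map f1 l = map f2 l -> forall x, In x l -> f1 x = f2 x.
Proof.
  induction l as [|a l IH]; simpl. tauto. intros H x [<-|Hx]; inversion H; auto.
Qed.

Lemma hT_le_alpha a T s : A a T -> T s = true -> leo (hT T s) a.
Proof.
  intros HA Hs. apply A_iff in HA as [Hw [H0 Ha]]. eapply Ole_trans; [|apply Ha].
  apply rank_le_root with T; auto. apply Hw. apply hT_rank; auto.
Qed.

Lemma data_U a n T1 T2 : A a T1 -> A a T2 -> data a n T1 = data a n T2 -> U a n T1 T2.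
Proof.
  intros H1 H2 E. pose proof (map_eq_in _ _ _ E) as E'. apply U_char; auto.
  split; [exact H2|split].
  - intros s Hs. apply In_win in Hs. specialize (E' s Hs). simpl in E'.
    destruct (T1 s), (T2 s); congruence.
  - intros s Hs Ht. apply In_win in Hs. specialize (E' s Hs). simpl in E'. rewrite Ht in E'.
    destruct (T2 s) eqn:Ht2; [|discriminate]. inversion E' as [E2].
    assert (R : eqo a (rep a)) by apply eqo_sym, rep_eqo.
    pose proof (code_spec (rep a) (hT T1 s) (Ole_trans _ _ _ (hT_le_alpha a T1 s H1 Ht) (proj1 R))) as C1.
    pose proof (code_spec (rep a) (hT T2 s) (Ole_trans _ _ _ (hT_le_alpha a T2 s H2 Ht2) (proj1 R))) as C2.
    rewrite E2 in C1. eapply eqo_trans; [exact C2|apply eqo_sym; exact C1].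
Qed.

Fixpoint enc (l : list nat) : nat := match l with [] => 0 | x :: l => S (to_nat (x, enc l)) end.
Lemma enc_inj l1 l2 : enc l1 = enc l2 -> l1 = l2.
Proof.
  revert l2. induction l1 as [|x l1 IH]; intros [|y l2] H; simpl in H; try discriminate; auto.
  assert (H' : to_nat (x, enc l1) = to_nat (y, enc l2)) by (injection H; auto).
  apply (f_equal of_nat) in H'. rewrite !cancel_of_to in H'. inversion H'.
  f_equal. apply IH; auto.
Qed.

Fixpoint iterS (k : nat) (x : Ord) : Ord := match k with 0 => x | S k => OS (iterS k x) end.
Fixpoint omul (a : Ord) : Ord :=
  match a with
  | OZ => OZ
  | OS b => OL (fun k => iterS k (omul b))
  | OL f => OL (fun k => omul (f k))
  end.

Lemma iterS_mono k x y : leo x y -> leo (iterS k x) (iterS k y).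
Proof. induction k; simpl; auto. Qed.

Lemma iterS_le k k' x : k <= k' -> leo (iterS k x) (iterS k' x).
Proof.
  induction 1. apply Ole_refl. eapply Ole_trans; [exact IHle|]. apply Olt_le, Olt_succ.
Qed.

Lemma iterS_lt k k' x : k < k' -> lto (iterS k x) (iterS k' x).
Proof. intro H. eapply Olt_le_trans; [apply Olt_succ|]. apply (iterS_le (S k) k'). lia. Qed.

Lemma omul_mono a b : leo a b -> leo (omul a) (omul b).
Proof.
  intro H. apply Ole_ole in H. induction H; simpl.
  - exact I.
  - eapply Ole_trans; eauto.
  - apply OL_le. intro k. exists k. apply iterS_mono; auto.
  - eapply Ole_cocone. exact IHole.
  - first [exact H0 | intro k; apply H0].
Qed.

Definition emb (a : Ord) (c : nat) : Ord := iterS c (omul a).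

Lemma emb_lt a a' c c' : lto a a' -> lto (emb a c) (emb a' c').
Proof.
  intro H. unfold emb. eapply Olt_le_trans; [|apply (iterS_le 0 c'); lia]. simpl.
  eapply Olt_le_trans; [|apply (omul_mono (OS a) a' H)]. simpl. rewrite Olt_OL. exists (S c).
  apply Olt_succ.
Qed.

Lemma emb_inj a a' c c' : eqo (emb a c) (emb a' c') -> eqo a a' /\ c = c'.
Proof.
  intro E. assert (Ha : eqo a a').
  { destruct (Ole_lt_total a a') as [H|H].
    - destruct (classic (leo a' a)) as [H2|H2]. split; auto.
      apply not_le_lt in H2. exfalso. apply (Olt_irrefl (emb a c)). eapply Olt_le_trans.
      apply (emb_lt a a' c c' H2). apply E.
    - exfalso. apply (Olt_irrefl (emb a' c')). eapply Olt_le_trans. apply (emb_lt a' a c' c H). apply E. }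
  split; auto.
  assert (Em : eqo (emb a' c') (emb a c')).
  { unfold emb. split; apply iterS_mono, omul_mono, Ha. }
  destruct (Nat.lt_trichotomy c c') as [H|[H|H]]; auto; exfalso.
  - apply (Olt_irrefl (emb a c)). eapply Olt_le_trans. apply (iterS_lt c c' (omul a) H).
    eapply Ole_trans. apply (proj2 Em). apply (proj2 E).
  - apply (Olt_irrefl (emb a c')). eapply Olt_le_trans. apply (iterS_lt c' c (omul a) H).
    eapply Ole_trans. apply (proj1 E). apply (proj1 Em).
Qed.

Lemma U_eqo a b n T T' : eqo a b -> U a n T T' -> U b n T T'.
Proof.
  intros E [H1 [H2 H3]]. split; auto. eapply A_eqo; eauto.
Qed.
Lemma tau_open_eqo a b O : eqo a b -> tau_open a O -> tau_open b O.
Proof.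
  intros E [H1 H2]. split. intros T HT. eapply A_eqo; eauto.
  intros T HT. destruct (H2 T HT) as [n Hn]. exists n. intros T' H'. apply Hn.
  eapply U_eqo; [apply eqo_sym|]; eauto.
Qed.
Lemma nd_eqo a b N : eqo a b -> nowhere_dense a N -> nowhere_dense b N.
Proof.
  intros E H O HO Hne. destruct (H O (tau_open_eqo b a O (eqo_sym _ _ E) HO) Hne) as [O' [H1 [H2 [H3 H4]]]].
  exists O'. split. eapply tau_open_eqo; eauto. auto.
Qed.
Lemma meager_eqo a b M : eqo a b -> meager a M -> meager b M.
Proof. intros E [N [H1 H2]]. exists N. split; auto. intro k. eapply nd_eqo; eauto. Qed.

Definition Pj (F : pset) (x : Ord * pt * nat) : Prop :=
  let '(a, T, n) := x in olt OZ a /\ A a T /\ meager a (fun T' => U a n T T' /\ ~ F T').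

Lemma Pj_ex F : borel_Tr F -> ~ Istar F -> exists x, Pj F x.
Proof.
  intros HB HnI. assert (H : exists a, olt OZ a /\ ~ meager a (fun T => F T /\ A a T)).
  { apply NNPP. intro H. apply HnI. exists F. split; auto. split. intros x Hx; exact Hx.
    intros a Ha. apply NNPP. intro H2. apply H. eauto. }
  destruct H as [a [Ha Hnm]]. destruct (nonmeager_local a F (proj1 HB) Hnm) as [T [n [HA HM]]].
  exists (a, T, n). simpl. auto.
Qed.

Lemma omega2 : omega2_cc Istar.
Proof.
  intros J F HF Hint.
  set (x := fun j => epsilon (inhabits (OZ, (fun _ : list nat => false), 0)) (Pj (F j))).
  assert (Hx : forall j, Pj (F j) (x j)).
  { intro j. unfold x. apply epsilon_spec. apply Pj_ex; apply HF. }
  exists (fun j => let '(a, T, n) := x j in emb a (to_nat (n, enc (data a n T)))).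
  intros i j E. apply NNPP. intro Hne.
  pose proof (Hx i) as Hi. pose proof (Hx j) as Hj.
  destruct (x i) as [[ai Ti] ni], (x j) as [[aj Tj] nj]. simpl in Hi, Hj.
  destruct Hi as [Hai [HAi HMi]], Hj as [Haj [HAj HMj]].
  apply oeq_iff, emb_inj in E as [Ea Ec]. apply (f_equal of_nat) in Ec. rewrite !cancel_of_to in Ec.
  pose proof (f_equal fst Ec) as En. pose proof (f_equal snd Ec) as Ed. simpl fst in En. cbv beta iota in Ed. change (enc (data ai ni Ti) = enc (data aj nj Tj)) in Ed. subst nj. apply enc_inj in Ed.
  assert (HAj' : A ai Tj) by (eapply A_eqo; [apply eqo_sym|]; eauto).
  assert (HU : U ai ni Ti Tj).
  { apply data_U; auto. unfold data in *. rewrite (rep_eq ai aj Ea) in Ed |- *. exact Ed. }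
  destruct (Hint i j Hne) as [B [HB [HsB HMB]]].
  apply (open_not_meager ai (U ai ni Tj)). apply U_open; auto. exists Tj. apply U_self; auto.
  eapply meager_subset; [|apply (meager_union2 ai _ _ (meager_union2 ai _ _ HMi (meager_eqo aj ai _ (eqo_sym _ _ Ea) HMj)) (HMB ai Hai))].
  intros T HT. destruct (classic (F i T)) as [Fi|Fi]; [destruct (classic (F j T)) as [Fj|Fj]|].
  - right. split. apply HsB. split; auto. eapply U_A; eauto.
  - left. right. split; auto. eapply U_eqo; eauto.
  - left. left. split; auto. eapply U_trans; eauto.
Qed.

Theorem proposition5p4 :
  sigma_ideal_on_Tr Istar /\ nontrivial Istar /\ borel_generated Istar /\
  ~ ccc Istar /\ omega2_cc Istar.
Proof.
  split. apply Istar_sigma. split. apply Istar_nontrivial. split. apply Istar_borel_generated.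
  split. apply not_ccc. apply omega2.
Qed.
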